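(* For all formulas $\alpha,\beta,\delta$: (1) $\alpha\land\beta\vDash\alpha$ and $\alpha\land\beta\vDash\beta$; (2) if $\alpha\vDash\beta$ then $\alpha\land\delta\vDash\beta$; (3) $\lnot\lnot\alpha\equiv\alpha$; (4) if $\alpha\vDash\beta$ then $\lnot\beta\vDash\lnot\alpha$; (5) $\mathbf f\vDash\beta$ and $\beta\vDash\mathbf t$.
   Context: Hilbert spaces and states: for $n\ge1$, $\mathcal H^{(n)}=(\mathbb C^2)^{\otimes n}$ with canonical basis $|x_1,\dots,x_n\rangle$ ($x_i\in\{0,1\}$, $|0\rangle=(1,0)$, $|1\rangle=(0,1)$); $\mathfrak D(\mathcal H^{(n)})$ is the set of density operators (qumixes). A truth-perspective is a unitary $\mathfrak T$ on $\mathbb C^2$, $\mathfrak T^{(n)}=\mathfrak T^{\otimes n}$. $^{\mathfrak T}P_1^{(n)}$ (resp. $^{\mathfrak T}P_0^{(n)}$) is the projection onto the span of the $\mathfrak T^{(n)}|x_1,\dots,x_n\rangle$ with $x_n=1$ (resp. $0$). $\mathtt p_{\mathfrak T}(\rho)=\mathrm{tr}(^{\mathfrak T}P_1^{(n)}\rho)$, and $\rho\preceq_{\mathfrak T}\sigma$ iff $\mathtt p_{\mathfrak T}(\rho)\le\mathtt p_{\mathfrak T}(\sigma)$. $Red^{(j_1,\dots,j_s)}_{[n_1,\dots,n_t]}(\rho)$ is the reduced state of $\rho$ on factors $j_1,\dots,j_s$ of $\mathcal H^{(n_1)}\otimes\cdots\otimes\mathcal H^{(n_t)}$. Gates (canonical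 basis, extended linearly): $\mathtt{NOT}^{(n)}|x_1..x_n\rangle=|x_1..x_{n-1}\rangle\otimes|1-x_n\rangle$; $\sqrt{\mathtt I}^{(n)}|x_1..x_n\rangle=|x_1..x_{n-1}\rangle\otimes\frac1{\sqrt2}((-1)^{x_n}|x_n\rangle+|1-x_n\rangle)$; $\sqrt{\mathtt{NOT}}^{(n)}|x_1..x_n\rangle=|x_1..x_{n-1}\rangle\otimes(\frac{1-i}2|x_n\rangle+\frac{1+i}2|1-x_n\rangle)$; $\mathtt{XOR}^{(m,n)}|x_1..x_m,y_1..y_n\rangle=|x_1..x_m,y_1..y_{n-1}\rangle\otimes|x_m\oplus y_n\rangle$; $\mathtt T^{(m,n,p)}|x_1..x_m,y_1..y_n,z_1..z_p\rangle=|x_1..x_m,y_1..y_n,z_1..z_{p-1}\rangle\otimes|x_my_n\oplus z_p\rangle$ ($\oplus$ addition mod 2). For a gate $G$ on $\mathcal H^{(n)}$: $G_{\mathfrak T}=\mathfrak T^{(n)}G\mathfrak T^{(n)\dagger}$, $^{\mathfrak D}G_{\mathfrak T}(\rho)=G_{\mathfrak T}\rho G_{\mathfrak T}^\dagger$. Language: formulas built from atomic formulas (including distinguished atoms $\mathbf t,\mathbf f$) with unary $\lnot,\sqrt{id},\sqrt\lnot$, binary $\uplus$, ternary $\intercal$; $\alpha\land\beta:=\intercal(\alpha,\beta,\mathbf f)$, $\alpha\lor\beta:=\lnot(\lnot\alpha\land\lnot\beta)$. $At(\alpha)$ = number of occurrences of atomic formulas in $\alpha$. Syntactical tree: $Level_1^\alpha=(\alpha)$;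 $Level_{i+1}^\alpha$ is obtained from $Level_i^\alpha=(\beta_1,\dots,\beta_r)$ by replacing each non-atomic $\beta_j$ by its immediate subformulas (arguments, in order) and keeping atomic $\beta_j$; the last level $Level_h^\alpha$ lists all atomic occurrences. $\mathcal H^{(At\alpha)}=\bigotimes_j\mathcal H^{(At\beta_j)}$. The $\mathfrak T$-gate $G^\alpha_{\mathfrak T(i)}$ ($1\le i<h$) is the tensor product over $j$ of: identity of $\mathbb C^2$ if $\beta_j$ atomic; $\mathtt{NOT}_{\mathfrak T}^{(At\beta)}$, $\sqrt{\mathtt I}_{\mathfrak T}^{(At\beta)}$, $\sqrt{\mathtt{NOT}}_{\mathfrak T}^{(At\beta)}$ for $\lnot\beta,\sqrt{id}\beta,\sqrt\lnot\beta$; $\mathtt{XOR}_{\mathfrak T}^{(At\beta',At\beta'')}$ for $\beta'\uplus\beta''$; $\mathtt T_{\mathfrak T}^{(At\beta',At\beta'',At\beta''')}$ for $\intercal(\beta',\beta'',\beta''')$. Holistic model: a map $\mathtt{Hol}_{\mathfrak T}$ assigning to each level $Level_i^\alpha$ of each formula $\alpha$ a qumix in $\mathfrak D(\mathcal H^{(At\alpha)})$ such that (a) $\mathtt{Hol}_{\mathfrak T}(Level_i^\alpha)={}^{\mathfrak D}G^\alpha_{\mathfrak T(i)}(\mathtt{Hol}_{\mathfrak T}(Level_{i+1}^\alpha))$ for $1\le i<h$; (b) (normality) for each $\gamma$, with the contextual meaning of the occurrence $\beta_j$ in $Level_i^\gamma=(\beta_1,\dots,\beta_r)$ defined as $Red^{(j)}_{[At\beta_1,\dots,At\beta_r]}(\mathtt{Hol}_{\mathfrak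 T}(Level_i^\gamma))$, all occurrences of the same subformula $\beta$ in the tree of $\gamma$ have the same contextual meaning, denoted $\mathtt{Hol}^\gamma_{\mathfrak T}(\beta)$; (c) every occurrence of $\mathbf f$ (resp. $\mathbf t$) has contextual meaning $^{\mathfrak T}P_0^{(1)}$ (resp. $^{\mathfrak T}P_1^{(1)}$). Logical consequence: $\alpha\vDash\beta$ iff for every truth-perspective $\mathfrak T$, every formula $\gamma$ having both $\alpha$ and $\beta$ as subformulas (a formula counts as a subformula of itself), and every holistic model $\mathtt{Hol}_{\mathfrak T}$, $\mathtt{Hol}^\gamma_{\mathfrak T}(\alpha)\preceq_{\mathfrak T}\mathtt{Hol}^\gamma_{\mathfrak T}(\beta)$. $\alpha\equiv\beta$ means $\alpha\vDash\beta$ and $\beta\vDash\alpha$. *)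

(* Defs.v *)
From mathcomp Require Import all_boot all_order all_algebra.
From mathcomp Require Import complex.
From mathcomp Require Import reals Rstruct.

Set Implicit Arguments.
Unset Strict Implicit.
Unset Printing Implicit Defensive.
Import Order.TTheory GRing.Theory Num.Theory.
Local Open Scope ring_scope.

Definition C : numClosedFieldType := (Rdefinitions.R)[i].

(** Basis vectors |x_1,...,x_n> are bit strings [x : seq bool] of size n
    (true = 1); an operator is given by its matrix entries
    [A u x = <u|A|x>]. Only entries indexed by strings of size n matter. *)
Definition op := seq bool -> seq bool -> C.

Fixpoint allbits (n : nat) : seq (seq bool) :=
  if n is n'.+1 then
    [seq b :: s | b <- [:: false; true], s <- allbits n']
  else [:: [::]].

Definition opeq (n : nat) (A B : op) : Prop :=
  forall u x, size u = n -> size x = n -> A u x = B u x.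

Definition idop : op := fun u x => (u == x)%:R.

Definition opmul (n : nat) (A B : op) : op :=
  fun u x => \sum_(z <- allbits n) A u z * B z x.

Definition adj (A : op) : op := fun u x => (A x u)^*.

Definition trace (n : nat) (A : op) : C := \sum_(x <- allbits n) A x x.

Definition density (n : nat) (rho : op) : Prop :=
  (forall v : seq bool -> C,
      0 <= \sum_(u <- allbits n) \sum_(x <- allbits n) (v u)^* * rho u x * v x)
  /\ trace n rho = 1.

Definition unitary2 (T : op) : Prop :=
  opeq 1 (opmul 1 T (adj T)) idop /\ opeq 1 (opmul 1 (adj T) T) idop.

Definition tpow (T : op) : op :=
  fun u x => \prod_(p <- zip u x) T [:: p.1] [:: p.2].

(** ^T P_b^(n): projection onto span{ T^(n)|x> : x_n = b } *)
Definition projT (T : op) (n : nat) (b : bool) : op :=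
  fun u w => \sum_(x <- allbits n | last false x == b)
                tpow T u x * (tpow T w x)^*.

Definition probT (T : op) (n : nat) (rho : op) : C :=
  trace n (opmul n (projT T n true) rho).


Definition front (s : seq bool) : seq bool := take (size s).-1 s.

Definition lastgate (M : bool -> bool -> C) : op :=
  fun u x => (front u == front x)%:R * M (last false u) (last false x).

Definition NOTg : op := lastgate (fun a b => (a == ~~ b)%:R).

Definition sqrt2 : C := sqrtC 2.

Definition sqrtIg : op :=
  lastgate (fun a b => if a == b then (if b then -1 else 1) / sqrt2
                       else 1 / sqrt2).

Definition sqrtNOTg : op :=
  lastgate (fun a b => if a == b then (1 - 'i) / 2%:R else (1 + 'i) / 2%:R).

Definition setlast (s : seq bool) (c : bool) : seq bool := rcons (front s) c.

Definition XORg (m : nat) : op :=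
  fun u x => (u == setlast x (addb (nth false x m.-1) (last false x)))%:R.

Definition TOFg (m n : nat) : op :=
  fun u x => (u == setlast x
                 (addb (nth false x m.-1 && nth false x (m + n).-1)
                       (last false x)))%:R.

Definition conjT (T : op) (n : nat) (G : op) : op :=
  opmul n (opmul n (tpow T) G) (adj (tpow T)).

Definition Dgate (n : nat) (G : op) (rho : op) : op :=
  opmul n (opmul n G rho) (adj G).

Inductive form : Type :=
  | Atom of nat
  | Tt
  | Ff
  | Neg of form
  | Sqid of form
  | Sqneg of form
  | Xor of form & form
  | Tof of form & form & form.

Definition And (a b : form) : form := Tof a b Ff.
Definition Or (a b : form) : form := Neg (And (Neg a) (Neg b)).

Fixpoint At (a : form) : nat :=
  match a with
  | Atom _ | Tt | Ff => 1
  | Neg b | Sqid b | Sqneg b => At b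
  | Xor b c => At b + At c
  | Tof b c d => At b + At c + At d
  end.

Fixpoint height (a : form) : nat :=
  match a with
  | Atom _ | Tt | Ff => 1
  | Neg b | Sqid b | Sqneg b => (height b).+1
  | Xor b c => (maxn (height b) (height c)).+1
  | Tof b c d => (maxn (maxn (height b) (height c)) (height d)).+1
  end.

Definition children (a : form) : seq form :=
  match a with
  | Atom _ | Tt | Ff => [:: a]
  | Neg b | Sqid b | Sqneg b => [:: b]
  | Xor b c => [:: b; c]
  | Tof b c d => [:: b; c; d]
  end.

Definition expand (l : seq form) : seq form := flatten (map children l).

(** [level a k] = Level_{k+1}^a (levels are 0-indexed here: k < height a) *)
Definition level (a : form) (k : nat) : seq form := iter k expand [:: a].

Definition gate_of (b : form) : op :=
  match b with
  | Atom _ | Tt | Ff => idop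
  | Neg c => NOTg
  | Sqid c => sqrtIg
  | Sqneg c => sqrtNOTg
  | Xor c _ => XORg (At c)
  | Tof c d _ => TOFg (At c) (At d)
  end.

Definition gateT_of (T : op) (b : form) : op :=
  match b with
  | Atom _ | Tt | Ff => idop
  | _ => conjT T (At b) (gate_of b)
  end.

Fixpoint tens (l : seq (op * nat)) : op :=
  fun u x =>
    match l with
    | [::] => 1
    | (G, n) :: l' => G (take n u) (take n x) * tens l' (drop n u) (drop n x)
    end.

Definition levelgate (T : op) (a : form) (k : nat) : op :=
  tens [seq (gateT_of T b, At b) | b <- level a k].

Definition Red (ns : seq nat) (j : nat) (rho : op) : op :=
  fun u x =>
    let pre := \sum_(i < j) nth 0%N ns i in
    let post := (\sum_(i <- drop j.+1 ns) i)%N in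
    \sum_(a <- allbits pre) \sum_(c <- allbits post)
       rho (a ++ u ++ c) (a ++ x ++ c).

Definition ctx (Hol : form -> nat -> op) (g : form) (k j : nat) : op :=
  Red [seq At b | b <- level g k] j (Hol g k).

Definition occ (g : form) (k j : nat) (b : form) : Prop :=
  (k < height g)%N /\ (j < size (level g k))%N /\ nth Ff (level g k) j = b.

Definition holistic (T : op) (Hol : form -> nat -> op) : Prop :=
  (forall a k, (k < height a)%N -> density (At a) (Hol a k))
  /\ (forall a k, (k.+1 < height a)%N ->
        opeq (At a) (Hol a k) (Dgate (At a) (levelgate T a k) (Hol a k.+1)))
  /\ (forall g b k1 j1 k2 j2, occ g k1 j1 b -> occ g k2 j2 b ->
        opeq (At b) (ctx Hol g k1 j1) (ctx Hol g k2 j2))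
  /\ (forall g k j, occ g k j Ff -> opeq 1 (ctx Hol g k j) (projT T 1 false))
  /\ (forall g k j, occ g k j Tt -> opeq 1 (ctx Hol g k j) (projT T 1 true)).

(** alpha |= beta : for every truth-perspective T, every gamma containing
    alpha and beta as subformulas, every holistic model Hol,
    Hol^gamma(alpha) <=_T Hol^gamma(beta); Hol^gamma(x) is the (common, by
    normality) contextual meaning of the occurrences of x in gamma's tree *)
Definition consequence (a b : form) : Prop :=
  forall T, unitary2 T ->
  forall g Hol, holistic T Hol ->
  forall k1 j1 k2 j2, occ g k1 j1 a -> occ g k2 j2 b ->
    probT T (At a) (ctx Hol g k1 j1) <= probT T (At b) (ctx Hol g k2 j2).

Definition equiv (a b : form) : Prop := consequence a b /\ consequence b a.

(* Main.v *)
Require Import Defs.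
From mathcomp Require Import all_boot all_order all_algebra.
From mathcomp Require Import complex.
From mathcomp Require Import reals Rstruct.
From Stdlib Require Import Setoid Morphisms.
From mathcomp Require Import ring lra zify.
Set Implicit Arguments.
Unset Strict Implicit.
Unset Printing Implicit Defensive.
Import Order.TTheory GRing.Theory Num.Theory.
Local Open Scope ring_scope.


Lemma cons_inj2 (b : bool) : injective (cons b). Proof. by move=> x y []. Qed.

Lemma allbitsS n : allbits n.+1 = map (cons false) (allbits n) ++ map (cons true) (allbits n).
Proof. by rewrite /= cats0. Qed.

Lemma mem_allbits n s : (s \in allbits n) = (size s == n).
Proof.
elim: n s => [|n IH] s; first by case: s.
rewrite allbitsS mem_cat; case: s => [|c s].
  by apply/negbTE; rewrite negb_or; apply/andP; split; apply/mapP=> [[y _]].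
rewrite /= eqSS -IH; case: c.
- have -> : (true :: s \in map (cons false) (allbits n)) = false by apply/negbTE/mapP=> [[y _]].
  by rewrite (mem_map (@cons_inj2 true)).
- have -> : (false :: s \in map (cons true) (allbits n)) = false by apply/negbTE/mapP=> [[y _]].
  by rewrite (mem_map (@cons_inj2 false)) orbF.
Qed.

Lemma allbits_uniq n : uniq (allbits n).
Proof.
elim: n => [|n IH] //; rewrite allbitsS cat_uniq !map_inj_uniq //; try exact: cons_inj2.
rewrite IH andbT; apply/hasPn => x /mapP [y _ ->]; apply/mapP => [[z _]] //.
Qed.

Lemma allbits_cat (F : seq bool -> C) n m :
  \sum_(z <- allbits (n + m)) F z = \sum_(z1 <- allbits n) \sum_(z2 <- allbits m) F (z1 ++ z2).
Proof.
elim: n F => [|n IH] F; first by rewrite add0n /= big_seq1.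
rewrite addSn !allbitsS !big_cat !big_map /= !IH //.
Qed.

Lemma sum_delta (F : seq bool -> C) n w : size w = n ->
  \sum_(z <- allbits n) (z == w)%:R * F z = F w.
Proof.
move=> sw; rewrite (bigD1_seq w) ?mem_allbits ?sw ?allbits_uniq //= eqxx mul1r.
by rewrite big1 ?addr0 // => z /negbTE ->; rewrite mul0r.
Qed.

Lemma sum_deltar (F : seq bool -> C) n w : size w = n ->
  \sum_(z <- allbits n) F z * (z == w)%:R = F w.
Proof. by move=> sw; rewrite -(sum_delta F sw); apply: eq_bigr => z _; rewrite mulrC. Qed.

Lemma mem_allbitsP n s : s \in allbits n -> size s = n.
Proof. by rewrite mem_allbits => /eqP. Qed.

Lemma collapse n (F : seq bool -> seq bool -> seq bool -> C) (Phi : seq bool -> seq bool -> C) m :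
  (forall y z, size y = n -> size z = n -> \sum_(a <- allbits m) F a y z = (y == z)%:R) ->
  \sum_(a <- allbits m) \sum_(y <- allbits n) \sum_(z <- allbits n) F a y z * Phi y z =
  \sum_(y <- allbits n) Phi y y.
Proof.
move=> HF; rewrite exchange_big /=; apply: eq_big_seq => y /mem_allbitsP sy.
rewrite exchange_big /= -(sum_delta (Phi y) sy).
apply: eq_big_seq => z /mem_allbitsP sz; rewrite -mulr_suml HF // eq_sym //.
Qed.

Lemma opeq_refl n : Reflexive (opeq n). Proof. by move=> A u x. Qed.
Lemma opeq_sym n : Symmetric (opeq n). Proof. by move=> A B h u x su sx; rewrite h. Qed.
Lemma opeq_trans n : Transitive (opeq n).
Proof. by move=> A B D h1 h2 u x su sx; rewrite h1 ?h2. Qed.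
Add Parametric Relation n : op (opeq n)
  reflexivity proved by (@opeq_refl n) symmetry proved by (@opeq_sym n)
  transitivity proved by (@opeq_trans n) as opeq_rel.

Lemma opmul_eq n A A' B B' : opeq n A A' -> opeq n B B' -> opeq n (opmul n A B) (opmul n A' B').
Proof.
move=> hA hB u x su sx; apply: eq_big_seq => z /mem_allbitsP sz; by rewrite hA ?hB.
Qed.
Add Parametric Morphism n : (opmul n) with signature (opeq n ==> opeq n ==> opeq n) as opmul_mor.
Proof. by move=> *; apply: opmul_eq. Qed.

Lemma adj_eq n A A' : opeq n A A' -> opeq n (adj A) (adj A').
Proof. by move=> h u x su sx; rewrite /adj h. Qed.
Add Parametric Morphism n : (@adj) with signature (opeq n ==> opeq n) as adj_mor.
Proof. by move=> *; apply: adj_eq. Qed.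

Lemma opmulA n A B D : opeq n (opmul n (opmul n A B) D) (opmul n A (opmul n B D)).
Proof.
move=> u x _ _; rewrite /opmul.
under eq_bigr do rewrite mulr_suml.
rewrite exchange_big /=; apply: eq_bigr => z _; rewrite mulr_sumr.
by apply: eq_bigr => y _; rewrite mulrA.
Qed.

Lemma adj_mul n A B : opeq n (adj (opmul n A B)) (opmul n (adj B) (adj A)).
Proof.
move=> u x _ _; rewrite /adj /opmul rmorph_sum; apply: eq_bigr => z _.
by rewrite rmorphM mulrC.
Qed.

Lemma adjK n A : opeq n (adj (adj A)) A.
Proof. by move=> u x _ _; rewrite /adj conjCK. Qed.

Lemma mul1op n A : opeq n (opmul n idop A) A.
Proof. by move=> u x su _; rewrite /opmul /idop (eq_bigr (fun z => (z == u)%:R * A z x)) ?sum_delta // => z _; rewrite eq_sym. Qed.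

Lemma mulop1 n A : opeq n (opmul n A idop) A.
Proof. by move=> u x _ sx; rewrite /opmul /idop sum_deltar. Qed.

Definition isom n (U : op) := opeq n (opmul n (adj U) U) idop.
Definition coisom n (U : op) := opeq n (opmul n U (adj U)) idop.

Lemma isom_eq n U V : opeq n U V -> isom n U -> isom n V.
Proof. by rewrite /isom => ->. Qed.
Lemma coisom_eq n U V : opeq n U V -> coisom n U -> coisom n V.
Proof. by rewrite /coisom => ->. Qed.

Lemma Dgate_eq n U U' r r' : opeq n U U' -> opeq n r r' -> opeq n (Dgate n U r) (Dgate n U' r').
Proof. by rewrite /Dgate => -> ->. Qed.

Lemma trace_eq n r r' : opeq n r r' -> trace n r = trace n r'.
Proof. by move=> h; apply: eq_big_seq => z /mem_allbitsP sz; rewrite h. Qed.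

Lemma probT_eq T n r r' : opeq n r r' -> probT T n r = probT T n r'.
Proof. by move=> h; rewrite /probT; apply: trace_eq; rewrite h. Qed.


Definition tensor2 p (A B : op) : op :=
  fun u x => A (take p u) (take p x) * B (drop p u) (drop p x).

Lemma tensor2_cat p A B u1 u2 x1 x2 : size u1 = p -> size x1 = p ->
  tensor2 p A B (u1 ++ u2) (x1 ++ x2) = A u1 x1 * B u2 x2.
Proof. by move=> <- sx; rewrite /tensor2 take_size_cat // drop_size_cat // -sx take_size_cat // drop_size_cat. Qed.

Lemma size_takeP p q (y : seq bool) : size y = p + q -> size (take p y) = p.
Proof. by move=> sy; rewrite size_takel // sy leq_addr. Qed.
Lemma size_dropP p q (y : seq bool) : size y = p + q -> size (drop p y) = q.
Proof. by move=> sy; rewrite size_drop sy addKn. Qed.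

Lemma eq_split p q (y z : seq bool) : size y = p + q -> size z = p + q ->
  (y == z) = (take p y == take p z) && (drop p y == drop p z).
Proof.
move=> sy sz; rewrite -{1}(cat_take_drop p y) -{1}(cat_take_drop p z) eqseq_cat //.
by rewrite (size_takeP sy) (size_takeP sz).
Qed.

Lemma natr_and (a b : bool) : ((a && b)%:R : C) = a%:R * b%:R.
Proof. by case: a; case: b; rewrite ?mul1r ?mul0r. Qed.

Lemma isom_tensor2 p q A B : isom p A -> isom q B -> isom (p + q) (tensor2 p A B).
Proof.
move=> hA hB y z sy sz; rewrite /opmul /adj allbits_cat.
transitivity (\sum_(w1 <- allbits p) \sum_(w2 <- allbits q)
   (((A w1 (take p y))^* * A w1 (take p z)) * ((B w2 (drop p y))^* * B w2 (drop p z)))).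
  apply: eq_big_seq => w1 /mem_allbitsP s1; apply: eq_big_seq => w2 /mem_allbitsP s2.
  rewrite /tensor2 !take_size_cat // !drop_size_cat // rmorphM; ring.
rewrite -big_distrlr /=.
have := hA _ _ (size_takeP sy) (size_takeP sz); rewrite /opmul /adj => ->.
have := hB _ _ (size_dropP sy) (size_dropP sz); rewrite /opmul /adj => ->.
by rewrite /idop (eq_split sy sz) natr_and.
Qed.

Lemma coisom_tensor2 p q A B : coisom p A -> coisom q B -> coisom (p + q) (tensor2 p A B).
Proof.
move=> hA hB y z sy sz; rewrite /opmul /adj allbits_cat.
transitivity (\sum_(w1 <- allbits p) \sum_(w2 <- allbits q)
   ((A (take p y) w1 * (A (take p z) w1)^*) * (B (drop p y) w2 * (B (drop p z) w2)^*))).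
  apply: eq_big_seq => w1 /mem_allbitsP s1; apply: eq_big_seq => w2 /mem_allbitsP s2.
  rewrite /tensor2 !take_size_cat // !drop_size_cat // rmorphM; ring.
rewrite -big_distrlr /=.
have := hA _ _ (size_takeP sy) (size_takeP sz); rewrite /opmul /adj => ->.
have := hB _ _ (size_dropP sy) (size_dropP sz); rewrite /opmul /adj => ->.
by rewrite /idop (eq_split sy sz) natr_and.
Qed.

Lemma tensor2_eq p q A A' B B' : opeq p A A' -> opeq q B B' ->
  opeq (p + q) (tensor2 p A B) (tensor2 p A' B').
Proof. by move=> hA hB u x su sx; rewrite /tensor2 hA ?hB ?(size_takeP su) ?(size_takeP sx) ?(size_dropP su) ?(size_dropP sx). Qed.

Lemma tpow_tensor T n : opeq n.+1 (tpow T) (tensor2 1 T (tpow T)).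
Proof.
move=> u x su sx; case: u su => [|u0 u] // _; case: x sx => [|x0 x] // _.
by rewrite /tpow /tensor2 /= !take0 !drop0 big_cons.
Qed.

Lemma isom0 U : U [::] [::] = 1 -> isom 0 U.
Proof. by move=> h [|//] [|//] _ _; rewrite /opmul /adj /= big_seq1 h rmorph1 mulr1. Qed.
Lemma coisom0 U : U [::] [::] = 1 -> coisom 0 U.
Proof. by move=> h [|//] [|//] _ _; rewrite /opmul /adj /= big_seq1 h rmorph1 mulr1. Qed.

Lemma tpow_unit T : unitary2 T -> forall n, isom n (tpow T) /\ coisom n (tpow T).
Proof.
case=> h1 h2; elim=> [|n [IH1 IH2]].
  by split; [apply: isom0 | apply: coisom0]; rewrite /tpow big_nil.
split.
- apply: (@isom_eq n.+1 _ _ _ (isom_tensor2 h2 IH1)); symmetry; exact: tpow_tensor.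
- apply: (@coisom_eq n.+1 _ _ _ (coisom_tensor2 h1 IH2)); symmetry; exact: tpow_tensor.
Qed.


Lemma tens_cat (L1 L2 : seq (op * nat)) :
  opeq (sumn (map snd L1) + sumn (map snd L2)) (tens (L1 ++ L2))
       (tensor2 (sumn (map snd L1)) (tens L1) (tens L2)).
Proof.
elim: L1 => [|[G n] L1 IH] u x su sx.
  by rewrite /tensor2 /= !drop0 mul1r.
rewrite /= -addnA in su sx *.
rewrite /tensor2 /= take_takel ?leq_addr // take_takel ?leq_addr //.
rewrite IH ?(size_dropP su) ?(size_dropP sx) // /tensor2 !take_drop !drop_drop !(addnC n).
by rewrite mulrA.
Qed.

Lemma isom_tens (L : seq (op * nat)) :
  List.Forall (fun p => isom p.2 p.1) L -> isom (sumn (map snd L)) (tens L).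
Proof.
elim: L => [|[G n] L IH] h; first by apply: isom0.
inversion h; subst.
exact: (isom_tensor2 H1 (IH H2)).
Qed.

Definition setl (s : seq bool) c := setlast s c.

Lemma front_rcons (s : seq bool) c : front (rcons s c) = s.
Proof. by rewrite /front size_rcons /= -cats1 take_size_cat. Qed.

Lemma front_last (s : seq bool) : (0 < size s)%N -> rcons (front s) (last false s) = s.
Proof. by case/lastP: s => // s c _; rewrite front_rcons last_rcons. Qed.

Lemma size_front (s : seq bool) : size (front s) = (size s).-1.
Proof. by case/lastP: s => // s c; rewrite front_rcons size_rcons. Qed.

Lemma size_setlast (s : seq bool) c : (0 < size s)%N -> size (setlast s c) = size s.
Proof. by move=> h; rewrite /setlast size_rcons size_front prednK. Qed.

Lemma eq_setlast (u x : seq bool) c : size u = size x -> (0 < size x)%N ->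
  (u == setlast x c) = (front u == front x) && (last false u == c).
Proof.
move=> su sx; rewrite /setlast -{1}(front_last (s := u)) ?su // eqseq_rcons //.
Qed.

Definition pgate (h : seq bool -> bool -> bool) : op :=
  fun u x => (u == setlast x (h (front x) (last false x)))%:R.

Definition pf (h : seq bool -> bool -> bool) (x : seq bool) := setlast x (h (front x) (last false x)).

Lemma pf_size h n x : (0 < n)%N -> size x = n -> size (pf h x) = n.
Proof. by move=> n0 sx; rewrite /pf size_setlast // sx. Qed.

Lemma pf_inv h n x : (forall s b, h s (h s b) = b) -> (0 < n)%N -> size x = n -> pf h (pf h x) = x.
Proof.
move=> hh n0 sx; rewrite /pf /setlast front_rcons last_rcons hh front_last //.
by rewrite sx.
Qed.

Lemma pgate_sym h n u x : (forall s b, h s (h s b) = b) -> (0 < n)%N -> size u = n -> size x = n ->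
  (u == pf h x) = (x == pf h u).
Proof.
move=> hh n0 su sx; apply/eqP/eqP => ->; rewrite (pf_inv hh n0) //.
Qed.

Lemma pf_inj h n y z : (forall s b, h s (h s b) = b) -> (0 < n)%N -> size y = n -> size z = n ->
  (pf h y == pf h z) = (y == z).
Proof.
move=> hh n0 sy sz; apply/eqP/eqP => [e|->] //.
by rewrite -(pf_inv hh n0 sy) e (pf_inv hh n0 sz).
Qed.

Lemma isom_pgate h n : (forall s b, h s (h s b) = b) -> (0 < n)%N -> isom n (pgate h).
Proof.
move=> hh n0 y z sy sz; rewrite /opmul /adj /pgate /idop.
under eq_bigr do rewrite conjC_nat.
by rewrite (sum_delta (fun a => (a == pf h z)%:R) (pf_size h n0 sy)) (pf_inj hh n0 sy sz).
Qed.

Lemma pgate_sandwich h n (M : op) x : (forall s b, h s (h s b) = b) -> (0 < n)%N -> size x = n ->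
  opmul n (opmul n (pgate h) M) (adj (pgate h)) x x = M (pf h x) (pf h x).
Proof.
move=> hh n0 sx; rewrite /opmul /adj /pgate.
transitivity (\sum_(z <- allbits n) M (pf h x) z * (z == pf h x)%:R).
  apply: eq_big_seq => z /mem_allbitsP sz; rewrite conjC_nat (pgate_sym hh n0 sx sz).
  congr (_ * _); rewrite -(sum_delta (fun y => M y z) (pf_size h n0 sx)).
  by apply: eq_big_seq => y /mem_allbitsP sy; rewrite (pgate_sym hh n0 sx sy).
by rewrite sum_deltar // (pf_size h n0 sx).
Qed.

Lemma NOT_pgate n : (0 < n)%N -> opeq n NOTg (pgate (fun _ b => ~~ b)).
Proof.
move=> n0 u x su sx; rewrite /NOTg /lastgate /pgate eq_setlast ?su ?sx // natr_and //.
Qed.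

Lemma XOR_pgate m n : (m.-1 < n.-1)%N -> opeq n (XORg m) (pgate (fun s b => addb (nth false s m.-1) b)).
Proof.
move=> mn u x su sx; rewrite /XORg /pgate /front nth_take //.
by rewrite sx.
Qed.

Lemma TOF_pgate m1 m2 n : (m1.-1 < n.-1)%N -> ((m1 + m2).-1 < n.-1)%N ->
  opeq n (TOFg m1 m2) (pgate (fun s b => addb (nth false s m1.-1 && nth false s (m1 + m2).-1) b)).
Proof.
move=> h1 h2 u x su sx; rewrite /TOFg /pgate /front !nth_take //.
  by rewrite sx.
by rewrite sx.
Qed.

Lemma allbits1 (F : seq bool -> C) : \sum_(w <- allbits 1) F w = F [:: false] + F [:: true].
Proof. by rewrite /= !big_cons big_nil addr0. Qed.

Lemma isom_lastgate (M : bool -> bool -> C) n : (0 < n)%N ->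
  (forall b b', (M false b)^* * M false b' + (M true b)^* * M true b' = (b == b')%:R) ->
  isom n (lastgate M).
Proof.
move=> n0 hM y z sy sz; rewrite /opmul /adj /lastgate /idop.
have e : n = (n.-1 + 1)%N by rewrite addn1 prednK.
rewrite e allbits_cat.
transitivity (\sum_(w1 <- allbits n.-1) (w1 == front y)%:R * ((w1 == front z)%:R *
        (((M false (last false y))^* * M false (last false z) + (M true (last false y))^* * M true (last false z))))).
  apply: eq_big_seq => w1 /mem_allbitsP s1; rewrite allbits1 /=.
  rewrite !cats1 !front_rcons !last_rcons !rmorphM !rmorph_nat.
  ring.
rewrite sum_delta ?size_front ?sy // hM -natr_and.
by rewrite -{3}(front_last (s := y)) ?sy // -{3}(front_last (s := z)) ?sz // eqseq_rcons.
Qed.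

Lemma opeqS n A B : opeq n A B -> opeq n B A.
Proof. by move=> h u x su sx; rewrite h. Qed.

Lemma sqrt2_facts : sqrt2^* = sqrt2 /\ sqrt2 * sqrt2 = 2 /\ sqrt2 != 0.
Proof.
have h2 : sqrt2 * sqrt2 = 2 by rewrite -expr2 sqrtCK.
split; first by apply: geC0_conj; rewrite sqrtC_ge0 ler0n.
split=> //; apply/eqP => e; move: h2; rewrite e mulr0 => /eqP; by rewrite eq_sym pnatr_eq0.
Qed.

Lemma sqrtI_unit : forall b b' : bool,
  let M := (fun a b : bool => if a == b then (if b then -1 else 1) / sqrt2 else 1 / sqrt2 : C) in
  (M false b)^* * M false b' + (M true b)^* * M true b' = (b == b')%:R.
Proof.
have [cs [ss s0]] := sqrt2_facts.
have cs' : (Num.Num_conj__canonical__GRing_RMorphism C) sqrt2 = sqrt2 by exact: cs.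
have n20 : (2 : C) != 0 by rewrite pnatr_eq0.
move=> b b' M; rewrite /M.
case: b; case: b' => /=; rewrite !(rmorphM, fmorphV, rmorphN, rmorph1, cs').
- apply: (@eq_trans _ _ (2 / (sqrt2 * sqrt2))); first by field.
  by rewrite ss divff.
- by field.
- by field.
- apply: (@eq_trans _ _ (2 / (sqrt2 * sqrt2))); first by field.
  by rewrite ss divff.
Qed.

Lemma sqrtNOT_unit : forall b b' : bool,
  let M := (fun a b : bool => if a == b then (1 - 'i) / 2%:R else (1 + 'i) / 2%:R : C) in
  (M false b)^* * M false b' + (M true b)^* * M true b' = (b == b')%:R.
Proof.
have n20 : (2 : C) != 0 by rewrite pnatr_eq0.
have hi : ('i : C) * 'i = -1 by rewrite -expr2 sqrCi.
have ci : (Num.Num_conj__canonical__GRing_RMorphism C) 'i = - 'i by exact: conjCi.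
move=> b b' M; rewrite /M.
case: b; case: b' => /=; rewrite !(rmorphM, fmorphV, rmorphB, rmorphD, rmorph1, rmorph_nat, ci);
  apply/eqP; rewrite -subr_eq0; apply/eqP.
- match goal with |- ?X = 0 => have -> : X = (-1/2) * ('i * 'i + 1) by field end.
  by rewrite hi addNr mulr0.
- match goal with |- ?X = 0 => have -> : X = (1/2) * ('i * 'i + 1) by field end.
  by rewrite hi addNr mulr0.
- match goal with |- ?X = 0 => have -> : X = (1/2) * ('i * 'i + 1) by field end.
  by rewrite hi addNr mulr0.
- match goal with |- ?X = 0 => have -> : X = (-1/2) * ('i * 'i + 1) by field end.
  by rewrite hi addNr mulr0.
Qed.

Lemma isom_conjT T n G : isom n (tpow T) -> coisom n (tpow T) -> isom n G -> isom n (conjT T n G).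
Proof.
move=> hi hc hG; rewrite /isom /conjT.
rewrite adj_mul adjK adj_mul !opmulA.
rewrite -(opmulA (adj (tpow T)) (tpow T)) (hi : opeq _ _ _) mul1op.
rewrite -(opmulA (adj G) G) (hG : opeq _ _ _) mul1op.
exact: hc.
Qed.

Lemma isom_idop : isom 1 idop.
Proof.
move=> u x su sx; rewrite /opmul /adj /idop.
under eq_bigr do rewrite conjC_nat.
by rewrite sum_delta.
Qed.

Lemma At_pos b : (0 < At b)%N.
Proof. elim: b => //= *; rewrite ?addn_gt0; apply/orP; left; rewrite ?addn_gt0 ?At_pos; by [|apply/orP; left]. Qed.

Lemma isom_gateT T b : unitary2 T -> isom (At b) (gateT_of T b).
Proof.
move=> hT; have [hi hc] := tpow_unit hT (At b).
case: b hi hc => [k|||c|c|c|c d|c d e] hi hc /=; try exact: isom_idop; apply: isom_conjT => //.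
- exact: (isom_eq (opeqS (NOT_pgate (At_pos c))) (@isom_pgate (fun _ b => ~~ b) (At c) (fun s b => negbK b) (At_pos c))).
- exact: isom_lastgate (At_pos c) sqrtI_unit.
- exact: isom_lastgate (At_pos c) sqrtNOT_unit.
- have h : ((At c).-1 < (At c + At d).-1)%N.
    by have := At_pos c; have := At_pos d; lia.
  apply: (isom_eq (opeqS (XOR_pgate h))).
  apply: isom_pgate; last by rewrite addn_gt0 At_pos.
  by move=> s b; rewrite addbA addbb.
- have h1 : ((At c).-1 < (At c + At d + At e).-1)%N.
    by have := At_pos c; have := At_pos d; have := At_pos e; lia.
  have h2 : ((At c + At d).-1 < (At c + At d + At e).-1)%N.
    by have := At_pos c; have := At_pos d; have := At_pos e; lia.
  apply: (isom_eq (opeqS (TOF_pgate h1 h2))).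
  apply: isom_pgate; last by rewrite !addn_gt0 At_pos.
  by move=> s b; rewrite addbA addbb.
Qed.


Definition RedL p (r : op) : op := fun u x => \sum_(a <- allbits p) r (a ++ u) (a ++ x).
Definition RedR q (r : op) : op := fun u x => \sum_(c <- allbits q) r (u ++ c) (x ++ c).
Definition Red2 p q r := RedR q (RedL p r).

Lemma RedL_eq p n r r' : opeq (p + n) r r' -> opeq n (RedL p r) (RedL p r').
Proof.
move=> h u x su sx; apply: eq_big_seq => a /mem_allbitsP sa.
by rewrite h // size_cat ?sa ?su ?sx.
Qed.

Lemma RedR_eq q n r r' : opeq (n + q) r r' -> opeq n (RedR q r) (RedR q r').
Proof.
move=> h u x su sx; apply: eq_big_seq => a /mem_allbitsP sa.
by rewrite h // size_cat ?sa ?su ?sx.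
Qed.

Lemma isom_swap n A y z : isom n A -> size y = n -> size z = n ->
  \sum_(a <- allbits n) A a y * (A a z)^* = (y == z)%:R.
Proof.
move=> h sy sz; have := h z y sz sy; rewrite /opmul /adj /idop eq_sym => <-.
by apply: eq_bigr => a _; rewrite mulrC.
Qed.

Lemma reorder4 (r1 r2 r3 r4 : seq (seq bool)) (G : seq bool -> seq bool -> seq bool -> seq bool -> C) :
  \sum_(z1 <- r1) \sum_(z2 <- r2) \sum_(y1 <- r3) \sum_(y2 <- r4) G y1 y2 z1 z2 =
  \sum_(y1 <- r3) \sum_(z1 <- r1) \sum_(y2 <- r4) \sum_(z2 <- r2) G y1 y2 z1 z2.
Proof.
under eq_bigr do rewrite exchange_big /=.
rewrite exchange_big /=; apply: eq_bigr => y1 _; apply: eq_bigr => z1 _.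
by rewrite exchange_big.
Qed.

Lemma reorder3 (r1 r2 r3 : seq (seq bool)) (G : seq bool -> seq bool -> seq bool -> C) :
  \sum_(a <- r1) \sum_(b <- r2) \sum_(c <- r3) G a b c =
  \sum_(c <- r3) \sum_(b <- r2) \sum_(a <- r1) G a b c.
Proof.
rewrite exchange_big /=; under eq_bigr do rewrite exchange_big /=.
by rewrite exchange_big.
Qed.

Lemma RedL_Dgate p m A V r : isom p A ->
  opeq m (RedL p (Dgate (p + m) (tensor2 p A V) r)) (Dgate m V (RedL p r)).
Proof.
move=> hA u x su sx; rewrite /RedL /Dgate /opmul /adj.
pose Phi y1 z1 := \sum_(y2 <- allbits m) \sum_(z2 <- allbits m) V u y2 * r (y1 ++ y2) (z1 ++ z2) * (V x z2)^*.
transitivity (\sum_(a <- allbits p) \sum_(y1 <- allbits p) \sum_(z1 <- allbits p)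
                (A a y1 * (A a z1)^*) * Phi y1 z1).
  apply: eq_big_seq => a /mem_allbitsP sa; rewrite allbits_cat.
  transitivity (\sum_(z1 <- allbits p) \sum_(z2 <- allbits m) \sum_(y1 <- allbits p) \sum_(y2 <- allbits m)
      (A a y1 * (A a z1)^*) * (V u y2 * r (y1 ++ y2) (z1 ++ z2) * (V x z2)^*)).
    apply: eq_big_seq => z1 /mem_allbitsP t1; apply: eq_big_seq => z2 /mem_allbitsP t2.
    rewrite allbits_cat mulr_suml; apply: eq_big_seq => y1 /mem_allbitsP s1.
    rewrite mulr_suml; apply: eq_big_seq => y2 /mem_allbitsP s2.
    rewrite !tensor2_cat // rmorphM; ring.
  rewrite reorder4; apply: eq_bigr => y1 _; apply: eq_bigr => z1 _.
  by rewrite /Phi mulr_sumr; apply: eq_bigr => y2 _; rewrite mulr_sumr.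
rewrite (@collapse p (fun a y z => A a y * (A a z)^*) Phi p); last by move=> y z sy sz; apply: isom_swap.
transitivity (\sum_(z2 <- allbits m) \sum_(y2 <- allbits m) \sum_(a <- allbits p)
    V u y2 * r (a ++ y2) (a ++ z2) * (V x z2)^*); last first.
  apply: eq_bigr => z2 _; rewrite mulr_suml; apply: eq_bigr => y2 _.
  by rewrite mulr_sumr mulr_suml.
by rewrite /Phi reorder3.
Qed.

Lemma reorder4b (r1 r2 r3 r4 : seq (seq bool)) (G : seq bool -> seq bool -> seq bool -> seq bool -> C) :
  \sum_(z1 <- r1) \sum_(z2 <- r2) \sum_(y1 <- r3) \sum_(y2 <- r4) G y1 y2 z1 z2 =
  \sum_(y2 <- r4) \sum_(z2 <- r2) \sum_(y1 <- r3) \sum_(z1 <- r1) G y1 y2 z1 z2.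
Proof.
transitivity (\sum_(z1 <- r1) \sum_(z2 <- r2) \sum_(y2 <- r4) \sum_(y1 <- r3) G y1 y2 z1 z2).
  by apply: eq_bigr => z1 _; apply: eq_bigr => z2 _; rewrite exchange_big.
transitivity (\sum_(z1 <- r1) \sum_(y2 <- r4) \sum_(z2 <- r2) \sum_(y1 <- r3) G y1 y2 z1 z2).
  by apply: eq_bigr => z1 _; rewrite exchange_big.
rewrite exchange_big /=; apply: eq_bigr => y2 _.
rewrite exchange_big /=; apply: eq_bigr => z2 _.
by rewrite exchange_big.
Qed.

Lemma RedR_Dgate q m V B r : isom q B ->
  opeq m (RedR q (Dgate (m + q) (tensor2 m V B) r)) (Dgate m V (RedR q r)).
Proof.
move=> hB u x su sx; rewrite /RedR /Dgate /opmul /adj.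
pose Phi y2 z2 := \sum_(y1 <- allbits m) \sum_(z1 <- allbits m) V u y1 * r (y1 ++ y2) (z1 ++ z2) * (V x z1)^*.
transitivity (\sum_(c <- allbits q) \sum_(y2 <- allbits q) \sum_(z2 <- allbits q)
                (B c y2 * (B c z2)^*) * Phi y2 z2).
  apply: eq_big_seq => c /mem_allbitsP sc; rewrite allbits_cat.
  transitivity (\sum_(z1 <- allbits m) \sum_(z2 <- allbits q) \sum_(y1 <- allbits m) \sum_(y2 <- allbits q)
      (B c y2 * (B c z2)^*) * (V u y1 * r (y1 ++ y2) (z1 ++ z2) * (V x z1)^*)).
    apply: eq_big_seq => z1 /mem_allbitsP t1; apply: eq_big_seq => z2 /mem_allbitsP t2.
    rewrite allbits_cat mulr_suml; apply: eq_big_seq => y1 /mem_allbitsP s1.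
    rewrite mulr_suml; apply: eq_big_seq => y2 /mem_allbitsP s2.
    rewrite !tensor2_cat ?su ?sx // rmorphM; ring.
  rewrite reorder4b; apply: eq_bigr => y2 _; apply: eq_bigr => z2 _.
  by rewrite /Phi mulr_sumr; apply: eq_bigr => y1 _; rewrite mulr_sumr.
rewrite (@collapse q (fun a y z => B a y * (B a z)^*) Phi q); last by move=> y z sy sz; apply: isom_swap.
transitivity (\sum_(z1 <- allbits m) \sum_(y1 <- allbits m) \sum_(c <- allbits q)
    V u y1 * r (y1 ++ c) (z1 ++ c) * (V x z1)^*); last first.
  apply: eq_bigr => z1 _; rewrite mulr_suml; apply: eq_bigr => y1 _.
  by rewrite mulr_sumr mulr_suml.
by rewrite /Phi reorder3.
Qed.

Lemma Red2_Dgate p n q A G B r : isom p A -> isom q B ->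
  opeq n (Red2 p q (Dgate (p + (n + q)) (tensor2 p A (tensor2 n G B)) r)) (Dgate n G (Red2 p q r)).
Proof.
move=> hA hB; rewrite /Red2.
transitivity (RedR q (Dgate (n + q) (tensor2 n G B) (RedL p r))).
  apply: RedR_eq; exact: RedL_Dgate.
exact: RedR_Dgate.
Qed.

Definition dg T n (r : op) x :=
  \sum_(u <- allbits n) \sum_(w <- allbits n) (tpow T u x)^* * r u w * tpow T w x.

Lemma dg_ge0 T n r x : density n r -> 0 <= dg T n r x.
Proof. by case=> h _; exact: (h (fun u => tpow T u x)). Qed.

Lemma dg_eq T n r r' x : opeq n r r' -> dg T n r x = dg T n r' x.
Proof.
move=> h; apply: eq_big_seq => u /mem_allbitsP su; apply: eq_big_seq => w /mem_allbitsP sw.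
by rewrite h.
Qed.

Lemma tpow_cat T u1 u2 x1 x2 : size u1 = size x1 ->
  tpow T (u1 ++ u2) (x1 ++ x2) = tpow T u1 x1 * tpow T u2 x2.
Proof. by move=> s; rewrite /tpow zip_cat // big_cat. Qed.

Lemma coisom_swap n A y z : coisom n A -> size y = n -> size z = n ->
  \sum_(a <- allbits n) (A y a)^* * A z a = (y == z)%:R.
Proof.
move=> h sy sz; have := h z y sz sy; rewrite /opmul /adj /idop eq_sym => <-.
by apply: eq_bigr => a _; rewrite mulrC.
Qed.

Lemma dg_RedL T p n r y : coisom p (tpow T) -> size y = n ->
  dg T n (RedL p r) y = \sum_(a <- allbits p) dg T (p + n) r (a ++ y).
Proof.
move=> hc sy; rewrite /dg.
pose Phi a1 a2 := \sum_(u <- allbits n) \sum_(w <- allbits n)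
   (tpow T u y)^* * r (a1 ++ u) (a2 ++ w) * tpow T w y.
transitivity (\sum_(a <- allbits p) \sum_(a1 <- allbits p) \sum_(a2 <- allbits p)
   ((tpow T a1 a)^* * tpow T a2 a) * Phi a1 a2); last first.
  apply: eq_big_seq => a /mem_allbitsP sa; rewrite allbits_cat.
  apply: eq_big_seq => a1 /mem_allbitsP s1.
  transitivity (\sum_(a2 <- allbits p) \sum_(u <- allbits n) \sum_(w <- allbits n)
     (tpow T (a1 ++ u) (a ++ y))^* * r (a1 ++ u) (a2 ++ w) * tpow T (a2 ++ w) (a ++ y)).
    apply: eq_big_seq => a2 /mem_allbitsP s2; rewrite /Phi mulr_sumr; apply: eq_big_seq => u /mem_allbitsP su.
    rewrite mulr_sumr; apply: eq_big_seq => w /mem_allbitsP sw.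
    rewrite !tpow_cat ?s1 ?s2 ?sa //.
    rewrite rmorphM; ring.
  rewrite exchange_big /=; apply: eq_bigr => u _; by rewrite allbits_cat.
rewrite (@collapse p (fun a y z => (tpow T y a)^* * tpow T z a) Phi p); last first.
  by move=> y1 z1 s1 t1; apply: coisom_swap.
rewrite /Phi reorder3 [RHS]exchange_big /=; apply: eq_bigr => u _; apply: eq_bigr => w _.
by rewrite /RedL mulr_sumr mulr_suml.
Qed.

Lemma dg_RedR T q n r y : coisom q (tpow T) -> size y = n ->
  dg T n (RedR q r) y = \sum_(c <- allbits q) dg T (n + q) r (y ++ c).
Proof.
move=> hc sy; rewrite /dg.
pose Phi c1 c2 := \sum_(w <- allbits n) \sum_(u <- allbits n)
   (tpow T u y)^* * r (u ++ c1) (w ++ c2) * tpow T w y.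
transitivity (\sum_(c <- allbits q) \sum_(c2 <- allbits q) \sum_(c1 <- allbits q)
   ((tpow T c1 c)^* * tpow T c2 c) * Phi c1 c2); last first.
  apply: eq_big_seq => c /mem_allbitsP sc; rewrite allbits_cat.
  transitivity (\sum_(u <- allbits n) \sum_(c1 <- allbits q) \sum_(w <- allbits n) \sum_(c2 <- allbits q)
     (tpow T (u ++ c1) (y ++ c))^* * r (u ++ c1) (w ++ c2) * tpow T (w ++ c2) (y ++ c)); last first.
    by apply: eq_bigr => u _; apply: eq_bigr => c1 _; rewrite allbits_cat.
  rewrite reorder4b; apply: eq_big_seq => c2 /mem_allbitsP s2; apply: eq_big_seq => c1 /mem_allbitsP s1.
  rewrite /Phi mulr_sumr; apply: eq_big_seq => w /mem_allbitsP sw.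
  rewrite mulr_sumr; apply: eq_big_seq => u /mem_allbitsP su.
  rewrite !tpow_cat ?su ?sw ?sy //.
  rewrite rmorphM; ring.
rewrite (@collapse q (fun a y z => (tpow T z a)^* * tpow T y a) (fun c2 c1 => Phi c1 c2) q); last first.
  by move=> y1 z1 s1 t1; rewrite eq_sym; apply: coisom_swap.
rewrite /Phi reorder3; apply: eq_bigr => u _; apply: eq_bigr => w _.
by rewrite /RedR mulr_sumr mulr_suml.
Qed.

Lemma dg_mat T n r x : dg T n r x = opmul n (opmul n (adj (tpow T)) r) (tpow T) x x.
Proof.
rewrite /dg /opmul /adj exchange_big /=; apply: eq_bigr => w _.
by rewrite mulr_suml.
Qed.

Lemma dg_gate T n G h r x : isom n (tpow T) -> (forall s b, h s (h s b) = b) -> (0 < n)%N ->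
  opeq n G (pgate h) -> size x = n ->
  dg T n (Dgate n (conjT T n G) r) x = dg T n r (pf h x).
Proof.
move=> hi hh n0 hG sx; rewrite !dg_mat.
set M := opmul n (opmul n (adj (tpow T)) r) (tpow T).
have key : opeq n (opmul n (opmul n (adj (tpow T)) (Dgate n (conjT T n G) r)) (tpow T))
                   (opmul n (opmul n (pgate h) M) (adj (pgate h))).
  rewrite -hG /M /Dgate /conjT adj_mul adjK adj_mul !opmulA.
  rewrite -(opmulA (adj (tpow T)) (tpow T)) (hi : opeq _ _ _) mul1op.
  by rewrite mulop1.
rewrite key //; exact: pgate_sandwich.
Qed.

Lemma probT_dg T n r : probT T n r = \sum_(x <- allbits n) (last false x)%:R * dg T n r x.
Proof.
rewrite /probT /trace /opmul /projT /dg.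
transitivity (\sum_(u <- allbits n) \sum_(z <- allbits n) \sum_(x <- allbits n)
   (last false x)%:R * ((tpow T z x)^* * r z u * tpow T u x)).
  apply: eq_bigr => u _; apply: eq_bigr => z _; rewrite big_mkcond mulr_suml.
  apply: eq_bigr => x _; case: (last false x) => /=; rewrite ?mul1r ?mul0r //; ring.
rewrite reorder3; apply: eq_bigr => x _; rewrite mulr_sumr; apply: eq_bigr => z _.
by rewrite mulr_sumr.
Qed.

Lemma sum_dg T n r : coisom n (tpow T) ->
  \sum_(x <- allbits n) dg T n r x = trace n r.
Proof.
move=> hc; rewrite /dg /trace.
transitivity (\sum_(x <- allbits n) \sum_(u <- allbits n) \sum_(w <- allbits n)
  ((tpow T u x)^* * tpow T w x) * r u w).
  by apply: eq_bigr => x _; apply: eq_bigr => u _; apply: eq_bigr => w _; ring.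
rewrite (@collapse n (fun x u w => (tpow T u x)^* * tpow T w x) r n) //.
by move=> y z sy sz; apply: coisom_swap.
Qed.

Lemma trace_RedL p n r : trace n (RedL p r) = trace (p + n) r.
Proof. by rewrite /trace /RedL allbits_cat exchange_big. Qed.

Lemma trace_RedR q n r : trace n (RedR q r) = trace (n + q) r.
Proof. by rewrite /trace /RedR allbits_cat. Qed.

Lemma dg_projT T n b x : isom n (tpow T) -> size x = n ->
  dg T n (projT T n b) x = (last false x == b)%:R.
Proof.
move=> hi sx; rewrite /dg /projT.
transitivity (\sum_(y <- allbits n) (last false y == b)%:R *
   ((\sum_(u <- allbits n) (tpow T u x)^* * tpow T u y) * (\sum_(w <- allbits n) (tpow T w y)^* * tpow T w x))).
  rewrite [RHS](eq_bigr (fun y => \sum_(u <- allbits n) \sum_(w <- allbits n) (last false y == b)%:R *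
      ((tpow T u x)^* * tpow T u y * ((tpow T w y)^* * tpow T w x)))); last first.
    by move=> y _; rewrite big_distrlr /= mulr_sumr; apply: eq_bigr => u _; rewrite mulr_sumr.
  rewrite reorder3 exchange_big /=; apply: eq_bigr => u _; apply: eq_bigr => w _.
  rewrite big_mkcond mulr_sumr mulr_suml; apply: eq_bigr => y _.
  by case: (_ == b); rewrite /= ?mul1r ?mul0r ?mulr0 //; ring.
transitivity (\sum_(y <- allbits n) (last false y == b)%:R * (y == x)%:R : C).
  apply: eq_big_seq => y /mem_allbitsP sy.
  have h1 := hi x y sx sy; have h2 := hi y x sy sx; rewrite /opmul /adj /idop in h1 h2.
  by rewrite h1 h2 [(x == y)]eq_sym -natr_and andbb.
by rewrite sum_deltar.
Qed.


Definition sA (l : seq Defs.form) := sumn (map At l).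

Lemma level_succ g k : level g k.+1 = expand (level g k).
Proof. by rewrite /level iterS. Qed.

Lemma sA_cat l1 l2 : sA (l1 ++ l2) = (sA l1 + sA l2)%N.
Proof. by rewrite /sA map_cat sumn_cat. Qed.

Lemma sA_cons b l : sA (b :: l) = (At b + sA l)%N.
Proof. by []. Qed.

Lemma sA_children b : sA (children b) = At b.
Proof. by case: b => //= *; rewrite /sA /= ?addn0 ?addnA. Qed.

Lemma expand_cons b l : expand (b :: l) = children b ++ expand l.
Proof. by []. Qed.

Lemma expand_cat l1 l2 : expand (l1 ++ l2) = expand l1 ++ expand l2.
Proof. by rewrite /expand map_cat flatten_cat. Qed.

Lemma sA_expand l : sA (expand l) = sA l.
Proof. by elim: l => //= b l IH; rewrite expand_cons sA_cat IH sA_children. Qed.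

Lemma sA_level g k : sA (level g k) = At g.
Proof.
elim: k => [|k IH]; first by rewrite /level /= /sA /= addn0.
by rewrite level_succ sA_expand.
Qed.

Lemma sum_ord_take (ns : seq nat) j : (\sum_(i < j) nth 0%N ns i)%R = sumn (take j ns).
Proof.
elim: j => [|j IH]; first by rewrite big_ord0 take0.
rewrite big_ord_recr /= IH.
case: (ltnP j (size ns)) => h.
  by rewrite (take_nth 0%N h) -cats1 sumn_cat /= addn0.
by rewrite !take_oversize ?(leq_trans h) // nth_default // ?addn0 ?addr0.
Qed.

Lemma ctx_Red2 Hol g k l1 b l2 : level g k = l1 ++ b :: l2 ->
  forall u x, ctx Hol g k (size l1) u x = Red2 (sA l1) (sA l2) (Hol g k) u x.
Proof.
move=> hl u x; rewrite /ctx /Red /Red2 /RedR /RedL hl sum_ord_take.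
rewrite map_cat take_size_cat ?size_map //.
have -> : drop (size l1).+1 ([seq At b0 | b0 <- l1] ++ [seq At b0 | b0 <- b :: l2]) = map At l2.
  by rewrite /= -cat_rcons drop_size_cat // size_rcons size_map.
by rewrite -sumnE exchange_big.
Qed.

Definition atomic (b : Defs.form) := match b with Atom _ | Tt | Ff => true | _ => false end.

Lemma In_nth (l : seq Defs.form) j : (j < size l)%N -> List.In (nth Ff l j) l.
Proof. elim: l j => [|y l IH] [|j] //= h; [by left | right; exact: IH]. Qed.

Lemma In_expand x l : List.In x (expand l) -> exists2 y, List.In y l & List.In x (children y).
Proof.
elim: l => [|y l IH] //= h; rewrite expand_cons in h.
case: (List.in_app_or _ _ _ h) => {}h; first by exists y => //; left.
by case: (IH h) => z h1 h2; exists z => //; right.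
Qed.

Lemma child_height b x : ~~ atomic b -> List.In x (children b) -> (height x < height b)%N.
Proof.
case: b => //= [c|c|c|c d|c d e] _ h; repeat case: h => [<-|h] //=; rewrite ?ltnS ?leq_maxl ?leq_maxr //.
- by rewrite (leq_trans (leq_maxl _ _) (leq_maxl _ _)).
- by rewrite (leq_trans (leq_maxr _ _) (leq_maxl _ _)).
Qed.

Lemma level_height g k x : List.In x (level g k) -> ~~ atomic x -> (height x + k <= height g)%N.
Proof.
elim: k x => [|k IH] x.
  by rewrite /level /= => [[<-|//]]; rewrite addn0.
rewrite level_succ => /In_expand [y hy hx] ax.
have ay : ~~ atomic y.
  apply/negP => ay; have e : children y = [:: y] by case: y ay {hy hx}.
  rewrite e in hx; case: hx => [ey|[]]; by rewrite -ey ay in ax.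
have := IH y hy ay; have := child_height ay hx; lia.
Qed.

Lemma occ_next g k j b : occ g k j b -> ~~ atomic b -> (k.+1 < height g)%N.
Proof.
case=> hk [hj hb] ab; have := level_height (In_nth hj); rewrite hb => /(_ ab).
have hp : forall c, (0 < height c)%N by case.
have h2 : (1 < height b)%N.
  case: b ab {hb} => //= *; rewrite ltnS ?hp // ?(leq_trans (hp _) (leq_maxl _ _)) //.
  by rewrite (leq_trans (hp _) (leq_trans (leq_maxl _ _) (leq_maxl _ _))).
lia.
Qed.

Lemma occ_split g k j b : occ g k j b ->
  level g k = take j (level g k) ++ b :: drop j.+1 (level g k) /\ size (take j (level g k)) = j.
Proof.
case=> hk [hj hb]; split; last by rewrite size_takel // ltnW.
by rewrite -{1}(cat_take_drop j (level g k)) (drop_nth Ff hj) hb.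
Qed.

Lemma Red2_eq p n q r r' : opeq (p + (n + q)) r r' -> opeq n (Red2 p q r) (Red2 p q r').
Proof. by move=> h; apply: RedR_eq; apply: RedL_eq. Qed.

Definition gl T := fun b : Defs.form => (gateT_of T b, At b).

Lemma snd_gl T l : map snd (map (gl T) l) = map At l.
Proof. by elim: l => //= b l ->. Qed.

Lemma isom_gl T l : unitary2 T -> isom (sA l) (tens (map (gl T) l)).
Proof.
move=> hT; rewrite /sA -(snd_gl T); apply: isom_tens.
elim: l => [|b l IH] /=; constructor => //; exact: isom_gateT.
Qed.

Lemma ctx_step T Hol g k l1 b l2 : unitary2 T -> holistic T Hol ->
  level g k = l1 ++ b :: l2 -> (k.+1 < height g)%N ->
  opeq (At b) (ctx Hol g k (size l1))
       (Dgate (At b) (gateT_of T b) (Red2 (sA l1) (sA l2) (Hol g k.+1))).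
Proof.
move=> hT hH hl hk.
have eN : At g = (sA l1 + (At b + sA l2))%N by rewrite -(sA_level g k) hl sA_cat sA_cons.
have hol := hH.2.1 g k hk; rewrite eN in hol.
have hlg : opeq (sA l1 + (At b + sA l2)) (levelgate T g k)
   (tensor2 (sA l1) (tens (map (gl T) l1)) (tensor2 (At b) (gateT_of T b) (tens (map (gl T) l2)))).
  rewrite /levelgate hl map_cat.
  have h := @tens_cat (map (gl T) l1) (map (gl T) (b :: l2)).
  rewrite !snd_gl in h; exact: h.
transitivity (Red2 (sA l1) (sA l2) (Hol g k)).
  by move=> u x _ _; exact: (ctx_Red2 Hol hl u x).
transitivity (Red2 (sA l1) (sA l2) (Dgate (sA l1 + (At b + sA l2))
   (tensor2 (sA l1) (tens (map (gl T) l1)) (tensor2 (At b) (gateT_of T b) (tens (map (gl T) l2)))) (Hol g k.+1))).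
  by apply: Red2_eq; rewrite hol; apply: Dgate_eq.
by apply: Red2_Dgate; apply: isom_gl.
Qed.

Definition mp T N H i := \sum_(X <- allbits N) (nth false X i)%:R * dg T N H X.

Lemma mp_block T P n Q H i : unitary2 T -> (i < n)%N ->
  \sum_(Y <- allbits n) (nth false Y i)%:R * dg T n (Red2 P Q H) Y = mp T (P + (n + Q)) H (P + i).
Proof.
move=> hT hi; have hc m := (tpow_unit hT m).2.
rewrite /mp allbits_cat.
transitivity (\sum_(a <- allbits P) \sum_(Y <- allbits n) \sum_(c <- allbits Q)
    (nth false Y i)%:R * dg T (P + (n + Q)) H (a ++ (Y ++ c))); last first.
  apply: eq_big_seq => a /mem_allbitsP sa; rewrite allbits_cat.
  apply: eq_big_seq => Y /mem_allbitsP sY; apply: eq_big_seq => c /mem_allbitsP sc.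
  rewrite nth_cat sa ltnNge leq_addr /= addKn nth_cat sY hi //.
rewrite reorder3 exchange_big /=.
apply: eq_big_seq => Y /mem_allbitsP sY; rewrite /Red2 dg_RedR // mulr_sumr.
apply: eq_big_seq => c /mem_allbitsP sc; rewrite dg_RedL // ?size_cat ?sY ?sc // mulr_sumr //.
Qed.

Lemma reindex h n (F : seq bool -> C) : (forall s b, h s (h s b) = b) -> (0 < n)%N ->
  \sum_(x <- allbits n) F (pf h x) = \sum_(x <- allbits n) F x.
Proof.
move=> hh n0; rewrite -(big_map (pf h) xpredT F); apply: perm_big.
apply: uniq_perm; [|exact: allbits_uniq|].
  rewrite map_inj_in_uniq ?allbits_uniq // => y z /mem_allbitsP sy /mem_allbitsP sz e.
  by apply/eqP; rewrite -(pf_inj hh n0 sy sz) e.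
move=> x; rewrite mem_allbits; apply/mapP/eqP => [[y /mem_allbitsP sy ->]|sx].
  exact: pf_size.
by exists (pf h x); [rewrite mem_allbits (pf_size h n0 sx) | rewrite (pf_inv hh n0 sx)].
Qed.

Lemma probT_gate T n G h r : unitary2 T -> (forall s b, h s (h s b) = b) -> (0 < n)%N ->
  opeq n G (pgate h) ->
  probT T n (Dgate n (conjT T n G) r) =
  \sum_(x <- allbits n) (h (front x) (last false x))%:R * dg T n r x.
Proof.
move=> hT hh n0 hG; rewrite probT_dg.
transitivity (\sum_(x <- allbits n) (last false (pf h (pf h x)))%:R * dg T n r (pf h x)).
  apply: eq_big_seq => x /mem_allbitsP sx; rewrite (dg_gate r (tpow_unit hT n).1 hh n0 hG sx).
  by rewrite (pf_inv hh n0 sx).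
rewrite (reindex (fun y => (last false (pf h y))%:R * dg T n r y) hh n0).
by apply: eq_bigr => x _; rewrite /pf /setlast last_rcons.
Qed.

Lemma trace_Red2 P n Q r : trace n (Red2 P Q r) = trace (P + (n + Q)) r.
Proof. by rewrite /Red2 trace_RedR trace_RedL. Qed.


Lemma pr_ctx T Hol g k l1 b l2 : unitary2 T -> level g k = l1 ++ b :: l2 ->
  probT T (At b) (ctx Hol g k (size l1)) = mp T (At g) (Hol g k) (sA l1 + (At b).-1).
Proof.
move=> hT hl.
rewrite (@probT_eq T (At b) _ (Red2 (sA l1) (sA l2) (Hol g k))); last first.
  by move=> u x _ _; exact: (ctx_Red2 Hol hl u x).
rewrite probT_dg.
have eN : At g = (sA l1 + (At b + sA l2))%N by rewrite -(sA_level g k) hl sA_cat sA_cons.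
rewrite eN -mp_block //; last by rewrite prednK ?At_pos.
apply: eq_big_seq => Y /mem_allbitsP sY; by rewrite -nth_last sY.
Qed.

Lemma mp_bounds T N H i : unitary2 T -> density N H -> 0 <= mp T N H i <= 1.
Proof.
move=> hT hd; apply/andP; split.
  by apply: sumr_ge0 => X _; apply: mulr_ge0; [apply: ler0n | apply: dg_ge0].
rewrite -hd.2 -(sum_dg _ (tpow_unit hT N).2) /mp; apply: ler_sum => X _.
have := dg_ge0 T X hd; case: (nth false X i) => /= h; rewrite ?mul1r ?mul0r //.
Qed.

Lemma occ_level g k j b : occ g k j b ->
  exists l1 l2, level g k = l1 ++ b :: l2 /\ j = size l1.
Proof. by move=> ho; have [hl hs] := occ_split ho; exists (take j (level g k)), (drop j.+1 (level g k)). Qed.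

Lemma pr_bounds T Hol g k j b : unitary2 T -> holistic T Hol -> occ g k j b ->
  0 <= probT T (At b) (ctx Hol g k j) <= 1.
Proof.
move=> hT hH ho; have [l1 [l2 [hl ->]]] := occ_level ho.
rewrite (pr_ctx Hol hT hl); apply: mp_bounds => //.
by apply: hH.1; case: ho.
Qed.

Lemma level_next g k l1 b l2 : level g k = l1 ++ b :: l2 ->
  level g k.+1 = expand l1 ++ children b ++ expand l2.
Proof. by move=> hl; rewrite level_succ hl expand_cat expand_cons. Qed.

Lemma pr_neg T Hol g k j c : unitary2 T -> holistic T Hol -> occ g k j (Neg c) ->
  exists j', occ g k.+1 j' c /\
    probT T (At c) (ctx Hol g k j) = 1 - probT T (At c) (ctx Hol g k.+1 j').
Proof.
move=> hT hH ho; have hk := occ_next ho isT.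
have [l1 [l2 [hl ->]]] := occ_level ho.
have hl' : level g k.+1 = expand l1 ++ c :: expand l2 by rewrite (level_next hl).
exists (size (expand l1)); split.
  split=> //; split; first by rewrite hl' size_cat /= addnS ltnS leq_addr.
  by rewrite hl' nth_cat ltnn subnn.
rewrite (probT_eq T (ctx_step hT hH hl hk)) /=.
rewrite (probT_gate _ hT (h := fun _ b => ~~ b) _ (At_pos c) (NOT_pgate (At_pos c))); last by move=> _ b; rewrite negbK.
rewrite (pr_ctx Hol hT hl') sA_expand.
have eN : At g = (sA l1 + (At c + sA l2))%N by rewrite -(sA_level g k.+1) hl' sA_cat sA_cons !sA_expand.
rewrite eN -mp_block //; last by rewrite prednK ?At_pos.
have htr : \sum_(Y <- allbits (At c)) dg T (At c) (Red2 (sA l1) (sA l2) (Hol g k.+1)) Y = 1.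
  rewrite sum_dg ?trace_Red2; last exact: (tpow_unit hT _).2.
  by rewrite -eN; apply: (hH.1 g k.+1 hk).2.
rewrite -[X in X - _]htr -sumrB; apply: eq_big_seq => Y /mem_allbitsP sY.
by rewrite -sY nth_last; case: (last false Y); rewrite /= ?mul1r ?mul0r ?subrr ?subr0.
Qed.

Lemma sum_tof_le (D : seq bool -> C) (a b z : seq bool -> bool) n :
  (forall Y, size Y = n -> 0 <= D Y) ->
  \sum_(Y <- allbits n) ((a Y && b Y) (+) z Y)%:R * D Y <=
  \sum_(Y <- allbits n) (a Y)%:R * D Y + \sum_(Y <- allbits n) (z Y)%:R * D Y.
Proof.
move=> hD; rewrite -big_split /= big_seq [X in _ <= X]big_seq; apply: ler_sum => Y /mem_allbitsP sY.
rewrite -mulrDl; apply: ler_wpM2r; first exact: hD.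
by rewrite -natrD ler_nat; case: (a Y); case: (b Y); case: (z Y).
Qed.

Lemma probT_projT T b : unitary2 T -> probT T 1 (projT T 1 b) = b%:R.
Proof.
move=> hT; rewrite probT_dg allbits1 !dg_projT //; last exact: (tpow_unit hT 1).1.
  by case: b; rewrite /= ?mul0r ?mul1r ?add0r ?addr0.
exact: (tpow_unit hT 1).1.
Qed.

Lemma pr_and T Hol g k j c d : unitary2 T -> holistic T Hol -> occ g k j (Tof c d Ff) ->
  exists jc jd, occ g k.+1 jc c /\ occ g k.+1 jd d /\
   probT T (At (Tof c d Ff)) (ctx Hol g k j) <= probT T (At c) (ctx Hol g k.+1 jc) /\
   probT T (At (Tof c d Ff)) (ctx Hol g k j) <= probT T (At d) (ctx Hol g k.+1 jd).
Proof.
move=> hT hH ho; have hk := occ_next ho isT.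
have [l1 [l2 [hl ->]]] := occ_level ho.
have hl' : level g k.+1 = expand l1 ++ c :: d :: Ff :: expand l2 by rewrite (level_next hl).
set e1 := expand l1 in hl'; set e2 := expand l2 in hl'.
have hl2 : level g k.+1 = rcons e1 c ++ d :: Ff :: e2 by rewrite cat_rcons.
have hl3 : level g k.+1 = (e1 ++ [:: c; d]) ++ Ff :: e2 by rewrite -catA.
have se1 : sA e1 = sA l1 by rewrite /e1 sA_expand.
set n1 := At c; set n2 := At d.
have p1 : (0 < n1)%N := At_pos c. have p2 : (0 < n2)%N := At_pos d.
have eN : At g = (sA l1 + ((n1 + n2 + 1) + sA l2))%N.
  by rewrite -(sA_level g k) hl sA_cat sA_cons.
set N := (n1 + n2 + 1)%N.
set rb := Red2 (sA l1) (sA l2) (Hol g k.+1).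
have hsz : size (level g k.+1) = (size e1 + (size e2).+3)%N by rewrite hl' size_cat.
exists (size e1), (size e1).+1.
have oc : occ g k.+1 (size e1) c.
  by split=> //; split; [rewrite hsz; lia | rewrite hl' nth_cat ltnn subnn].
have od : occ g k.+1 (size e1).+1 d.
  by split=> //; split; [rewrite hsz; lia | rewrite hl2 nth_cat size_rcons ltnn subnn].
have ofr : occ g k.+1 (size e1).+2 Ff.
  split=> //; split; [rewrite hsz; lia | rewrite hl3 nth_cat size_cat /= addn2 ltnn subnn //].
have pc : probT T (At c) (ctx Hol g k.+1 (size e1)) =
    \sum_(Y <- allbits N) (nth false Y n1.-1)%:R * dg T N rb Y.
  rewrite (pr_ctx Hol hT hl') se1 eN -mp_block //; rewrite /N; lia.
have pd : probT T (At d) (ctx Hol g k.+1 (size e1).+1) =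
    \sum_(Y <- allbits N) (nth false Y (n1 + n2.-1))%:R * dg T N rb Y.
  rewrite -(size_rcons e1 c) (pr_ctx Hol hT hl2) -cats1 sA_cat se1 /sA /= addn0 -addnA eN -mp_block //.
  rewrite /N; lia.
have pf0 : \sum_(Y <- allbits N) (nth false Y (n1 + n2))%:R * dg T N rb Y = 0.
  have := hH.2.2.2.1 g k.+1 (size e1).+2 ofr => hf.
  transitivity (probT T 1 (projT T 1 false)); last by rewrite probT_projT.
  rewrite -(probT_eq T hf).
  have -> : (size e1).+2 = size (e1 ++ [:: c; d]) by rewrite size_cat addn2.
  rewrite (pr_ctx Hol hT hl3) sA_cat se1 /sA /= !addn0 eN -mp_block //.
  rewrite /N /n1 /n2; lia.
have hd : forall Y, size Y = N -> 0 <= dg T N rb Y.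
  move=> Y sY; rewrite /rb /Red2 dg_RedR //; last exact: (tpow_unit hT _).2.
  rewrite big_seq; apply: sumr_ge0 => c0 /mem_allbitsP sc.
  rewrite dg_RedL; [|exact: (tpow_unit hT _).2|by rewrite size_cat sY sc].
  apply: sumr_ge0 => a0 _; apply: dg_ge0; rewrite -eN; exact: (hH.1 g k.+1 hk).
have pand : probT T (At (Tof c d Ff)) (ctx Hol g k (size l1)) =
    \sum_(Y <- allbits N) (((nth false Y n1.-1) && (nth false Y (n1 + n2.-1))) (+) nth false Y (n1 + n2))%:R
          * dg T N rb Y.
  rewrite (probT_eq T (ctx_step hT hH hl hk)) /=.
  have h1 : (n1.-1 < N.-1)%N by rewrite /N; lia.
  have h2 : ((n1 + n2).-1 < N.-1)%N by rewrite /N; lia.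
  rewrite (probT_gate _ hT _ _ (TOF_pgate h1 h2)); last 2 first.
  - by move=> s b; rewrite addbA addbb.
  - by rewrite /N; lia.
  apply: eq_big_seq => Y /mem_allbitsP sY.
  rewrite /front !nth_take ?sY //.
  have -> : (n1 + n2).-1 = (n1 + n2.-1)%N by lia.
  by rewrite -nth_last sY /N addn1.
split=> //; split=> //; split.
  rewrite pand pc.
  apply: le_trans (sum_tof_le (fun Y => nth false Y n1.-1) (fun Y => nth false Y (n1 + n2.-1)) (fun Y => nth false Y (n1 + n2)) hd) _.
  by rewrite pf0 addr0.
rewrite pand pd.
under eq_bigr do rewrite andbC.
apply: le_trans (sum_tof_le (fun Y => nth false Y (n1 + n2.-1)) (fun Y => nth false Y n1.-1) (fun Y => nth false Y (n1 + n2)) hd) _.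
by rewrite pf0 addr0.
Qed.


Lemma pr_norm T Hol g x k1 j1 k2 j2 : holistic T Hol -> occ g k1 j1 x -> occ g k2 j2 x ->
  probT T (At x) (ctx Hol g k1 j1) = probT T (At x) (ctx Hol g k2 j2).
Proof. by move=> hH o1 o2; apply: probT_eq; exact: (hH.2.2.1 g x k1 j1 k2 j2 o1 o2). Qed.

Theorem theorem5p1 : forall a b d : Defs.form,
  (consequence (And a b) a /\ consequence (And a b) b) /\
  (consequence a b -> consequence (And a d) b) /\
  Defs.equiv (Neg (Neg a)) a /\
  (consequence a b -> consequence (Neg b) (Neg a)) /\
  (consequence Ff b /\ consequence b Tt).
Proof.
move=> a b d; split; [split|split; [|split; [split|split; [|split]]]].
- move=> T hT g Hol hH k1 j1 k2 j2 o1 o2.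
  have [jc [jd [oc [od [h1 h2]]]]] := pr_and hT hH o1.
  by rewrite (pr_norm hH o2 oc).
- move=> T hT g Hol hH k1 j1 k2 j2 o1 o2.
  have [jc [jd [oc [od [h1 h2]]]]] := pr_and hT hH o1.
  by rewrite (pr_norm hH o2 od).
- move=> hab T hT g Hol hH k1 j1 k2 j2 o1 o2.
  have [jc [jd [oc [od [h1 h2]]]]] := pr_and hT hH o1.
  exact: le_trans h1 (hab T hT g Hol hH _ _ _ _ oc o2).
- move=> T hT g Hol hH k1 j1 k2 j2 o1 o2.
  have [j' [o' e1]] := pr_neg hT hH o1.
  have [j'' [o'' e2]] := pr_neg hT hH o'.
  by rewrite /= e1 e2 subKr (pr_norm hH o'' o2).
- move=> T hT g Hol hH k1 j1 k2 j2 o1 o2.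
  have [j' [o' e1]] := pr_neg hT hH o2.
  have [j'' [o'' e2]] := pr_neg hT hH o'.
  by rewrite /= e1 e2 subKr (pr_norm hH o'' o1).
- move=> hab T hT g Hol hH k1 j1 k2 j2 o1 o2.
  have [jb [ob eb]] := pr_neg hT hH o1.
  have [ja [oa ea]] := pr_neg hT hH o2.
  rewrite /= eb ea; apply: lerB => //.
  exact: (hab T hT g Hol hH _ _ _ _ oa ob).
- move=> T hT g Hol hH k1 j1 k2 j2 o1 o2.
  rewrite (probT_eq T (hH.2.2.2.1 g k1 j1 o1)) probT_projT //.
  by have /andP [] := pr_bounds hT hH o2.
- move=> T hT g Hol hH k1 j1 k2 j2 o1 o2.
  rewrite (probT_eq T (hH.2.2.2.2 g k2 j2 o2)) probT_projT //.
  by have /andP [] := pr_bounds hT hH o1.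
Qed.
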